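(* Let $\Theta\vdash^\top t$ be a $\beta$-normal $\mathsf{F_{<:}^\top}$ term-in-context and $\Theta\vdash^\top T$ an $\mathsf{F_{<:}^\top}$ type. If $\Theta\vdash t:T$ is derivable in System $\mathsf{F_{<:}^{K\top}}$, then $\Theta\vdash^\top t:T$ is derivable in System $\mathsf{F_{<:}^\top}$.
   Context: System $\mathsf{F_{<:}^{K\top}}$: raw types $T ::= \top \mid X \mid T\to T \mid \forall^{\mathsf K}(X<:T).T \mid \forall^\top(X<:T).T$, up to $\alpha$-conversion. Contexts $\Theta$: finite sequences of $X<:T$ or $x:T$ with distinct variables, each type well-formed over the preceding part. Subtyping $\Theta\vdash S<:T$: (Var) $\Theta,X<:T,\Theta'\vdash X<:T$; (Top) $T<:\top$; (Refl); (Trans); ($\to$) from $S'<:S$, $T<:T'$ infer $S\to T<:S'\to T'$; ($\forall$-Fun) from $\Theta,X<:S\vdash T<:T'$ infer $\forall^{\mathsf K}(X<:S).T<:\forall^{\mathsf K}(X<:S).T'$; ($\forall$-Loc) from $\Theta\vdash T_0<:S_0$, $\Theta,X<:S_0\vdash S_1<:T_1$ infer $\forall^{\mathsf K}(X<:S_0).S_1<:\forall^\top(X<:T_0).T_1$; ($\forall$-Top) from $\Theta\vdash T_0<:S_0$, $\Theta,X<:\top\vdash S_1<:T_1$ infer $\forall^\top(X<:S_0).S_1<:\forall^\top(X<:T_0).T_1$. Raw terms $t ::= \mathsf{top}\mid x\mid\lambda(x:T).t\mid\Lambda(X<:T).t\mid t\,t\mid t\{T\}$. Typing: $\mathsf{top}:\top$;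 $\Theta,x:T,\Theta'\vdash x:T$; (sub) from $t:T$, $T<:T'$ infer $t:T'$; ($\to$-i) from $\Theta,x:S\vdash t:T$ infer $\lambda(x:S).t:S\to T$; ($\to$-e) from $t:S\to T$, $s:S$ infer $t\,s:T$; ($\forall$-i) from $\Theta,X<:S\vdash t:T$ infer $\Theta\vdash\Lambda(X<:S).t:\forall^{\mathsf K}(X<:S).T$; ($\forall$-e) from $\Theta\vdash t:\forall^\top(X<:S).T$ and $\Theta\vdash S'<:S$ infer $\Theta\vdash t\{S'\}:T[S'/X]$. $\mathsf{F_{<:}^\top}$ types, contexts and terms are those in which only $\forall^\top$ occurs. System $\mathsf{F_{<:}^\top}$ (judgements $\vdash^\top$) has subtyping rules Var, Top, Refl, Trans, $\to$, $\forall$-Top only, and the same typing rules except that ($\forall$-i) concludes $\Theta\vdash^\top\Lambda(X<:S).t:\forall^\top(X<:S).T$. A term is $\beta$-normal if it has no subterm of the form $(\lambda(x:S).t)\,s$ or $(\Lambda(X<:S).t)\{R\}$. *)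

(* Defs.v *)
(* Syntax of System F_{<:}^{K T} and F_{<:}^T, in de Bruijn
   style with separate index spaces for type variables and term variables
   (as in Vouillon's POPLmark solution).  alpha-conversion is built in. *)
From Stdlib Require Import Arith List.
Import ListNotations.

Inductive quant : Type := QK | QT .

Inductive typ : Type :=
  | Top : typ
  | TVar : nat -> typ
  | Arr : typ -> typ -> typ
  | All : quant -> typ -> typ -> typ.   (* All q S T = forall^q (X <: S). T, X bound as index 0 in T *)

Inductive trm : Type :=
  | ttop : trm
  | var : nat -> trm
  | abs : typ -> trm -> trm     (* lambda (x:T). t, x = term index 0 in t *)
  | tabs : typ -> trm -> trm    (* Lambda (X<:T). t, X = type index 0 in t *)
  | app : trm -> trm -> trm
  | tapp : trm -> typ -> trm.

Inductive binding : Type :=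
  | BSub : typ -> binding
  | BVar : typ -> binding.

(* contexts: head of the list = most recent (rightmost) binding *)
Definition env := list binding.

Fixpoint tshift (c : nat) (T : typ) : typ :=
  match T with
  | Top => Top
  | TVar n => if c <=? n then TVar (S n) else TVar n
  | Arr S1 T1 => Arr (tshift c S1) (tshift c T1)
  | All q S1 T1 => All q (tshift c S1) (tshift (S c) T1)
  end.

Fixpoint tshiftn (k : nat) (T : typ) : typ :=
  match k with 0 => T | S k' => tshift 0 (tshiftn k' T) end.

(* tsubst T k U = T[U/X_k] (capture-avoiding, lowering indices above k) *)
Fixpoint tsubst (T : typ) (k : nat) (U : typ) : typ :=
  match T with
  | Top => Top
  | TVar n => if n <? k then TVar n
              else if n =? k then tshiftn k U else TVar (n - 1)
  | Arr S1 T1 => Arr (tsubst S1 k U) (tsubst T1 k U)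
  | All q S1 T1 => All q (tsubst S1 k U) (tsubst T1 (S k) U)
  end.

Fixpoint ntv (E : env) : nat :=
  match E with [] => 0 | BSub _ :: E' => S (ntv E') | BVar _ :: E' => ntv E' end.
Fixpoint nv (E : env) : nat :=
  match E with [] => 0 | BSub _ :: E' => nv E' | BVar _ :: E' => S (nv E') end.

(* bound of the type variable X, expressed in context E *)
Fixpoint get_bound (E : env) (X : nat) : option typ :=
  match E with
  | [] => None
  | BSub T :: E' => match X with
                    | 0 => Some (tshift 0 T)
                    | S X' => option_map (tshift 0) (get_bound E' X')
                    end
  | BVar _ :: E' => get_bound E' X
  end.

(* type of the term variable x, expressed in context E *)
Fixpoint get_var (E : env) (x : nat) : option typ :=
  match E with
  | [] => None
  | BVar T :: E' => match x with 0 => Some T | S x' => get_var E' x' end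
  | BSub _ :: E' => option_map (tshift 0) (get_var E' x)
  end.

(* Well-formedness over n type variables.  If allowK = false, only
   forall^Top may occur (i.e. F_{<:}^Top types). *)
Fixpoint wf_typ (allowK : bool) (n : nat) (T : typ) : Prop :=
  match T with
  | Top => True
  | TVar X => X < n
  | Arr S1 T1 => wf_typ allowK n S1 /\ wf_typ allowK n T1
  | All q S1 T1 => (allowK = true \/ q = QT) /\ wf_typ allowK n S1 /\ wf_typ allowK (S n) T1
  end.

Fixpoint wf_env (allowK : bool) (E : env) : Prop :=
  match E with
  | [] => True
  | BSub T :: E' => wf_typ allowK (ntv E') T /\ wf_env allowK E'
  | BVar T :: E' => wf_typ allowK (ntv E') T /\ wf_env allowK E'
  end.

Fixpoint wf_trm (allowK : bool) (ntv0 nv0 : nat) (t : trm) : Prop :=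
  match t with
  | ttop => True
  | var x => x < nv0
  | abs T t1 => wf_typ allowK ntv0 T /\ wf_trm allowK ntv0 (S nv0) t1
  | tabs T t1 => wf_typ allowK ntv0 T /\ wf_trm allowK (S ntv0) nv0 t1
  | app t1 t2 => wf_trm allowK ntv0 nv0 t1 /\ wf_trm allowK ntv0 nv0 t2
  | tapp t1 T => wf_trm allowK ntv0 nv0 t1 /\ wf_typ allowK ntv0 T
  end.

Fixpoint beta_normal (t : trm) : Prop :=
  match t with
  | ttop => True
  | var _ => True
  | abs _ t1 => beta_normal t1
  | tabs _ t1 => beta_normal t1
  | app (abs _ _) _ => False
  | app t1 t2 => beta_normal t1 /\ beta_normal t2
  | tapp (tabs _ _) _ => False
  | tapp t1 _ => beta_normal t1
  end.

Inductive subK : env -> typ -> typ -> Prop :=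
  | subK_var : forall E X T, wf_env true E -> get_bound E X = Some T ->
      subK E (TVar X) T
  | subK_top : forall E S1, wf_env true E -> wf_typ true (ntv E) S1 ->
      subK E S1 Top
  | subK_refl : forall E T, wf_env true E -> wf_typ true (ntv E) T ->
      subK E T T
  | subK_trans : forall E S1 T U, subK E S1 T -> subK E T U -> subK E S1 U
  | subK_arrow : forall E S1 S' T T', subK E S' S1 -> subK E T T' ->
      subK E (Arr S1 T) (Arr S' T')
  | subK_all_fun : forall E S1 T T', subK (BSub S1 :: E) T T' ->
      subK E (All QK S1 T) (All QK S1 T')
  | subK_all_loc : forall E S0 S1 T0 T1, subK E T0 S0 ->
      subK (BSub S0 :: E) S1 T1 ->
      subK E (All QK S0 S1) (All QT T0 T1)
  | subK_all_top : forall E S0 S1 T0 T1, subK E T0 S0 ->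
      subK (BSub Top :: E) S1 T1 ->
      subK E (All QT S0 S1) (All QT T0 T1).

Inductive typK : env -> trm -> typ -> Prop :=
  | typK_top : forall E, wf_env true E -> typK E ttop Top
  | typK_var : forall E x T, wf_env true E -> get_var E x = Some T ->
      typK E (var x) T
  | typK_sub : forall E t T T', typK E t T -> subK E T T' -> typK E t T'
  | typK_abs : forall E S1 t T, typK (BVar S1 :: E) t T ->
      typK E (abs S1 t) (Arr S1 T)
  | typK_app : forall E t s S1 T, typK E t (Arr S1 T) -> typK E s S1 ->
      typK E (app t s) T
  | typK_tabs : forall E S1 t T, typK (BSub S1 :: E) t T ->
      typK E (tabs S1 t) (All QK S1 T)
  | typK_tapp : forall E t S1 S' T, typK E t (All QT S1 T) -> subK E S' S1 ->
      typK E (tapp t S') (tsubst T 0 S').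

Inductive subT : env -> typ -> typ -> Prop :=
  | subT_var : forall E X T, wf_env false E -> get_bound E X = Some T ->
      subT E (TVar X) T
  | subT_top : forall E S1, wf_env false E -> wf_typ false (ntv E) S1 ->
      subT E S1 Top
  | subT_refl : forall E T, wf_env false E -> wf_typ false (ntv E) T ->
      subT E T T
  | subT_trans : forall E S1 T U, subT E S1 T -> subT E T U -> subT E S1 U
  | subT_arrow : forall E S1 S' T T', subT E S' S1 -> subT E T T' ->
      subT E (Arr S1 T) (Arr S' T')
  | subT_all_top : forall E S0 S1 T0 T1, subT E T0 S0 ->
      subT (BSub Top :: E) S1 T1 ->
      subT E (All QT S0 S1) (All QT T0 T1).

Inductive typT : env -> trm -> typ -> Prop :=
  | typT_top : forall E, wf_env false E -> typT E ttop Top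
  | typT_var : forall E x T, wf_env false E -> get_var E x = Some T ->
      typT E (var x) T
  | typT_sub : forall E t T T', typT E t T -> subT E T T' -> typT E t T'
  | typT_abs : forall E S1 t T, typT (BVar S1 :: E) t T ->
      typT E (abs S1 t) (Arr S1 T)
  | typT_app : forall E t s S1 T, typT E t (Arr S1 T) -> typT E s S1 ->
      typT E (app t s) T
  | typT_tabs : forall E S1 t T, typT (BSub S1 :: E) t T ->
      typT E (tabs S1 t) (All QT S1 T)
  | typT_tapp : forall E t S1 S' T, typT E t (All QT S1 T) -> subT E S' S1 ->
      typT E (tapp t S') (tsubst T 0 S').

(* Main.v *)
Require Import Defs.
Set Warnings "-intuition-auto-with-star".
From Stdlib Require Import Arith List Lia.
Import ListNotations.

Ltac cmp := repeat match goal with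
 | |- context [?a <=? ?b] => destruct (Nat.leb_spec a b)
 | |- context [?a <? ?b] => destruct (Nat.ltb_spec a b)
 | |- context [?a =? ?b] => destruct (Nat.eqb_spec a b)
 end.

Lemma shift_shift : forall V c d, d <= c ->
  tshift (S c) (tshift d V) = tshift d (tshift c V).
Proof.
  induction V; intros c d Hd; simpl; auto.
  - do 3 (cmp; cbn [tshift tsubst]); try lia; try (f_equal; lia).
  - f_equal; auto.
  - f_equal; [apply IHV1 | apply IHV2]; lia.
Qed.

Lemma subst_shift : forall V c W, tsubst (tshift c V) c W = V.
Proof.
  induction V; intros c W; simpl; auto.
  - do 3 (cmp; cbn [tshift tsubst]); try lia; try (f_equal; lia).
  - f_equal; auto.
  - f_equal; auto.
Qed.

Lemma shift_shiftn : forall k c W, c <= k -> tshift c (tshiftn k W) = tshiftn (S k) W.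
Proof.
  induction k; intros c W Hc.
  - assert (c = 0) by lia; subst; reflexivity.
  - destruct c; [reflexivity|].
    change (tshiftn (S k) W) with (tshift 0 (tshiftn k W)).
    rewrite shift_shift by lia. rewrite IHk by lia. reflexivity.
Qed.

Lemma subst_shift_comm : forall T c k W, c <= k ->
  tsubst (tshift c T) (S k) W = tshift c (tsubst T k W).
Proof.
  induction T; intros c k W Hc; simpl; auto.
  - do 3 (cmp; cbn [tshift tsubst]); try lia; try (f_equal; lia); subst;
      try (symmetry; apply shift_shiftn; lia).
  - f_equal; auto.
  - f_equal; [apply IHT1 | apply IHT2]; lia.
Qed.

Lemma wf_shift : forall b T n c, wf_typ b n T -> c <= n -> wf_typ b (S n) (tshift c T).
Proof.
  induction T; intros m c H Hc; simpl in *; auto.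
  - cmp; cbn [tshift wf_typ]; lia.
  - intuition.
  - intuition; apply IHT2; auto; lia.
Qed.

Lemma wf_shiftn : forall b k m U, wf_typ b m U -> wf_typ b (k + m) (tshiftn k U).
Proof.
  induction k; intros; simpl; auto. apply wf_shift; auto; lia.
Qed.

Lemma wf_subst : forall b T k m U, wf_typ b (S (k + m)) T -> wf_typ b m U ->
  wf_typ b (k + m) (tsubst T k U).
Proof.
  induction T; intros k m U H HU; simpl in *; auto.
  - cmp; cbn [tsubst wf_typ]; try lia. apply wf_shiftn; auto.
  - intuition.
  - intuition; apply (IHT2 (S k)); auto.
Qed.

Lemma wf_ft : forall T n, wf_typ false n T -> wf_typ true n T.
Proof. induction T; simpl; intuition. Qed.

Lemma wf_env_ft : forall E, wf_env false E -> wf_env true E.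
Proof. induction E as [|[] E IH]; simpl; intuition; apply wf_ft; auto. Qed.

Lemma get_bound_wf : forall b E X T, wf_env b E -> get_bound E X = Some T ->
  wf_typ b (ntv E) T.
Proof.
  induction E as [|[U|U] E IH]; intros X T HE H; simpl in *; try discriminate.
  - destruct X.
    + inversion H; subst. apply wf_shift; intuition.
    + destruct (get_bound E X) eqn:Hg; simpl in H; inversion H; subst.
      apply wf_shift; [eapply IH; intuition; eauto | lia].
  - eapply IH; intuition eauto.
Qed.

Lemma get_bound_lt : forall E X T, get_bound E X = Some T -> X < ntv E.
Proof.
  induction E as [|[U|U] E IH]; intros X T H; simpl in *; try discriminate.
  - destruct X; [lia|]. destruct (get_bound E X) eqn:Hg; simpl in H; inversion H; subst.
    apply IH in Hg; lia.
  - eauto.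
Qed.

Lemma get_var_wf : forall b E x T, wf_env b E -> get_var E x = Some T ->
  wf_typ b (ntv E) T.
Proof.
  induction E as [|[U|U] E IH]; intros x T HE H; simpl in *; try discriminate.
  - destruct (get_var E x) eqn:Hg; simpl in H; inversion H; subst.
    apply wf_shift; [eapply IH; intuition; eauto | lia].
  - destruct x; [inversion H; subst; intuition|]. eapply IH; intuition eauto.
Qed.

Lemma ntv_app : forall F E, ntv (F ++ E) = ntv F + ntv E.
Proof. induction F as [|[] F IH]; intros; simpl; auto. Qed.

Lemma ntv_mid : forall F P E, ntv (F ++ BSub P :: E) = S (ntv F + ntv E).
Proof. intros; rewrite ntv_app; simpl; lia. Qed.

Lemma ntv_midv : forall F P E, ntv (F ++ BVar P :: E) = ntv (F ++ E).
Proof. intros; rewrite !ntv_app; simpl; lia. Qed.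

Inductive sa : env -> typ -> typ -> Prop :=
| sa_top : forall E S, wf_env true E -> wf_typ true (ntv E) S -> sa E S Top
| sa_rvar : forall E X, wf_env true E -> X < ntv E -> sa E (TVar X) (TVar X)
| sa_tvar : forall E X U T, get_bound E X = Some U -> sa E U T -> sa E (TVar X) T
| sa_arr : forall E S1 S2 T1 T2, sa E T1 S1 -> sa E S2 T2 -> sa E (Arr S1 S2) (Arr T1 T2)
| sa_fun : forall E S T T', sa (BSub S :: E) T T' -> sa E (All QK S T) (All QK S T')
| sa_loc : forall E S0 S1 T0 T1, sa E T0 S0 -> sa (BSub S0 :: E) S1 T1 ->
    sa E (All QK S0 S1) (All QT T0 T1)
| sa_all : forall E S0 S1 T0 T1, sa E T0 S0 -> sa (BSub Top :: E) S1 T1 ->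
    sa E (All QT S0 S1) (All QT T0 T1).

Lemma sa_regular : forall E S T, sa E S T ->
  wf_env true E /\ wf_typ true (ntv E) S /\ wf_typ true (ntv E) T.
Proof.
  induction 1; simpl in *; intuition.
  eapply get_bound_lt; eauto.
Qed.

Lemma sa_top_inv : forall E T, sa E Top T -> T = Top.
Proof. intros E T H; inversion H; auto. Qed.

Lemma sa_refl : forall T E, wf_env true E -> wf_typ true (ntv E) T -> sa E T T.
Proof.
  induction T; intros E HE HT; simpl in HT.
  - apply sa_top; simpl; auto.
  - apply sa_rvar; auto.
  - apply sa_arr; intuition.
  - destruct q.
    + apply sa_fun. apply IHT2; simpl; intuition.
    + apply sa_all; [apply IHT1 | apply IHT2]; simpl; intuition.
Qed.

Lemma get_bound_mid_top : forall F E, get_bound (F ++ BSub Top :: E) (ntv F) = Some Top.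
Proof.
  induction F as [|[] F IH]; intros; simpl; auto. rewrite IH; reflexivity.
Qed.

Lemma get_bound_mid_ne : forall F E P Q X, X <> ntv F ->
  get_bound (F ++ BSub P :: E) X = get_bound (F ++ BSub Q :: E) X.
Proof.
  induction F as [|[] F IH]; intros E P Q X H; simpl in *.
  - destruct X; [lia|]; auto.
  - destruct X; auto. rewrite (IH E P Q X); auto.
  - auto.
Qed.

Lemma wf_env_narrow : forall b F E P Q, wf_env b (F ++ BSub Q :: E) ->
  wf_typ b (ntv E) P -> wf_env b (F ++ BSub P :: E).
Proof.
  induction F as [|[] F IH]; intros E P Q H HP; simpl in *; intuition;
   try (rewrite ntv_mid in *; auto); eauto.
Qed.

Lemma sa_narrow : forall E0 S T, sa E0 S T -> forall F E P,
  E0 = F ++ BSub Top :: E -> wf_typ true (ntv E) P -> sa (F ++ BSub P :: E) S T.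
Proof.
  induction 1; intros F E0 P HE HP; subst.
  - apply sa_top. eapply wf_env_narrow; eauto. rewrite ntv_mid in *; auto.
  - apply sa_rvar. eapply wf_env_narrow; eauto. rewrite ntv_mid in *; auto.
  - destruct (Nat.eq_dec X (ntv F)).
    + subst. rewrite get_bound_mid_top in H. inversion H; subst.
      apply sa_top_inv in H0 as Ht. subst.
      destruct (sa_regular _ _ _ H0) as [HE _].
      apply sa_top. eapply wf_env_narrow; eauto. simpl. rewrite ntv_mid; lia.
    + eapply sa_tvar. rewrite (get_bound_mid_ne _ _ _ Top); eauto. eauto.
  - apply sa_arr; eauto.
  - apply sa_fun. apply (IHsa (BSub S :: F)); auto.
  - apply sa_loc; eauto. apply (IHsa2 (BSub S0 :: F)); auto.
  - apply sa_all; eauto. apply (IHsa2 (BSub Top :: F)); auto.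
Qed.

Lemma sa_trans : forall Q E S T, sa E S Q -> sa E Q T -> sa E S T.
Proof.
  induction Q as [|n|Q1 IH1 Q2 IH2|q Q1 IH1 Q2 IH2]; intros E S T H1 H2;
  (assert (Hc : T = Top \/ T <> Top) by (destruct T; [left; auto | right; discriminate ..]));
  (destruct Hc as [-> | Hne];
   [ destruct (sa_regular _ _ _ H1) as [? [? ?]]; apply sa_top; auto | ]);
  revert T Hne H2;
  match type of H1 with sa _ _ ?Q => remember Q as Q0 eqn:HQ end;
  induction H1; intros Tz Hne H2; try discriminate;
  try (eapply sa_tvar; [eassumption | eauto]).
  - apply sa_top_inv in H2; contradiction.
  - inversion HQ; subst; auto.
  - inversion HQ; subst. inversion H2; subst; [contradiction|].
    apply sa_arr; eauto.
  - inversion HQ; subst. inversion H2; subst; [contradiction| |].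
    + apply sa_fun; eauto.
    + apply sa_loc; eauto.
  - inversion HQ; subst. inversion H2; subst; [contradiction|].
    apply sa_loc; eauto. eapply IH2; eauto.
    destruct (sa_regular _ _ _ H1_) as [_ [_ Hw]].
    match goal with Hn : sa (BSub Top :: E) Q2 _ |- _ => apply (sa_narrow _ _ _ Hn [] E S0 eq_refl Hw) end.
  - inversion HQ; subst. inversion H2; subst; [contradiction|].
    apply sa_all; eauto.
Qed.

Lemma sa_subK : forall E S T, sa E S T -> subK E S T.
Proof.
  induction 1.
  - apply subK_top; auto.
  - apply subK_refl; auto.
  - eapply subK_trans; [|eauto]. apply subK_var; auto.
    apply (sa_regular _ _ _ H0).
  - apply subK_arrow; auto.
  - apply subK_all_fun; auto.
  - apply subK_all_loc; auto.
  - apply subK_all_top; auto.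
Qed.

Lemma subK_sa : forall E S T, subK E S T -> sa E S T.
Proof.
  induction 1.
  - eapply sa_tvar; eauto. apply sa_refl; auto. eapply get_bound_wf; eauto.
  - apply sa_top; auto.
  - apply sa_refl; auto.
  - eapply sa_trans; eauto.
  - apply sa_arr; auto.
  - apply sa_fun; auto.
  - apply sa_loc; auto.
  - apply sa_all; auto.
Qed.

Lemma get_bound_midv : forall F E V X,
  get_bound (F ++ BVar V :: E) X = get_bound (F ++ E) X.
Proof.
  induction F as [|[] F IH]; intros E V X; simpl; auto.
  destruct X; auto. rewrite IH; auto.
Qed.

Lemma wf_env_midv : forall b F E V, wf_env b (F ++ E) -> wf_typ b (ntv E) V ->
  wf_env b (F ++ BVar V :: E).
Proof.
  induction F as [|[] F IH]; intros E V H HV; simpl in *; intuition;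
    rewrite ntv_midv; auto.
Qed.

Lemma sa_weak_bvar : forall E0 S T, sa E0 S T -> forall F E V,
  E0 = F ++ E -> wf_typ true (ntv E) V -> sa (F ++ BVar V :: E) S T.
Proof.
  induction 1; intros F E0 V HE HV; subst.
  - apply sa_top. apply wf_env_midv; auto. rewrite ntv_midv; auto.
  - apply sa_rvar. apply wf_env_midv; auto. rewrite ntv_midv; auto.
  - eapply sa_tvar; [rewrite get_bound_midv; eauto | eauto].
  - apply sa_arr; eauto.
  - apply sa_fun. apply (IHsa (BSub S :: F)); auto.
  - apply sa_loc; eauto. apply (IHsa2 (BSub S0 :: F)); auto.
  - apply sa_all; eauto. apply (IHsa2 (BSub Top :: F)); auto.
Qed.

Fixpoint env_subst (W : typ) (F : env) : env :=
  match F with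
  | [] => []
  | BSub T :: F' => BSub (tsubst T (ntv F') W) :: env_subst W F'
  | BVar T :: F' => BVar (tsubst T (ntv F') W) :: env_subst W F'
  end.

Lemma ntv_env_subst : forall W F, ntv (env_subst W F) = ntv F.
Proof. induction F as [|[] F IH]; simpl; auto. Qed.

Lemma wf_env_subst : forall b W F E, wf_env b (F ++ BSub Top :: E) ->
  wf_typ b (ntv E) W -> wf_env b (env_subst W F ++ E).
Proof.
  induction F as [|[] F IH]; intros E H HW; simpl in *; intuition;
   rewrite ntv_app, ntv_env_subst; apply wf_subst; auto;
   rewrite ntv_mid in *; auto.
Qed.

Lemma get_bound_subst : forall W E F X U,
  get_bound (F ++ BSub Top :: E) X = Some U ->
  (X = ntv F /\ U = Top) \/
  exists X', tsubst (TVar X) (ntv F) W = TVar X' /\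
    get_bound (env_subst W F ++ E) X' = Some (tsubst U (ntv F) W).
Proof.
  intros W E. induction F as [|[T|T] F IH]; intros X U H; simpl in *.
  - destruct X.
    + inversion H; subst; auto.
    + right. destruct (get_bound E X) eqn:Hg; simpl in H; inversion H; subst.
      exists X. split; [simpl; rewrite Nat.sub_0_r; reflexivity|]. rewrite subst_shift; auto.
  - destruct X.
    + inversion H; subst. right. exists 0. split; [reflexivity|].
      simpl. rewrite subst_shift_comm by lia. reflexivity.
    + destruct (get_bound (F ++ BSub Top :: E) X) eqn:Hg; simpl in H; inversion H; subst.
      destruct (IH _ _ Hg) as [[-> ->] | [X' [H1 H2]]]; [left; auto|].
      right. exists (S X'). split.
      * pose proof (subst_shift_comm (TVar X) 0 (ntv F) W ltac:(lia)) as Hc.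
        simpl in Hc. rewrite H1 in Hc. simpl in Hc. exact Hc.
      * simpl. rewrite H2. simpl. rewrite subst_shift_comm by lia. reflexivity.
  - apply IH; auto.
Qed.

Lemma sa_subst : forall E0 A B, sa E0 A B -> forall F E W,
  E0 = F ++ BSub Top :: E -> wf_typ true (ntv E) W ->
  sa (env_subst W F ++ E) (tsubst A (ntv F) W) (tsubst B (ntv F) W).
Proof.
  induction 1; intros F E0 W HE HW; subst.
  - simpl. apply sa_top. apply wf_env_subst; auto.
    rewrite ntv_app, ntv_env_subst. apply wf_subst; auto. rewrite ntv_mid in *; auto.
  - apply sa_refl. apply wf_env_subst; auto.
    rewrite ntv_app, ntv_env_subst. apply wf_subst; auto. rewrite ntv_mid in *; auto.
  - destruct (get_bound_subst W _ _ _ _ H) as [[-> ->] | [X' [H1 H2]]].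
    + apply sa_top_inv in H0 as Ht. subst. simpl tsubst at 2.
      destruct (sa_regular _ _ _ H0) as [HE _].
      apply sa_top. apply wf_env_subst; auto.
      rewrite ntv_app, ntv_env_subst. apply wf_subst; auto.
      simpl. lia.
    + rewrite H1. eapply sa_tvar; eauto.
  - simpl. apply sa_arr; eauto.
  - simpl. apply sa_fun. apply (IHsa (BSub S :: F)); auto.
  - simpl. apply sa_loc; eauto. apply (IHsa2 (BSub S0 :: F)); auto.
  - simpl. apply sa_all; eauto. apply (IHsa2 (BSub Top :: F)); auto.
Qed.

Lemma sa_subT : forall E S T, sa E S T -> wf_env false E ->
  wf_typ false (ntv E) S -> wf_typ false (ntv E) T -> subT E S T.
Proof.
  induction 1; intros HE HS HT; simpl in *.
  - apply subT_top; auto.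
  - apply subT_refl; auto.
  - eapply subT_trans; [apply subT_var; eauto|].
    apply IHsa; auto. eapply get_bound_wf; eauto.
  - apply subT_arrow; intuition.
  - destruct HS as [[? | ?] _]; discriminate.
  - destruct HS as [[? | ?] _]; discriminate.
  - apply subT_all_top; intuition.
Qed.

Lemma expose_arr : forall E M S1 T, sa E M (Arr S1 T) -> wf_env false E ->
  wf_typ false (ntv E) M ->
  exists A B, wf_typ false (ntv E) A /\ wf_typ false (ntv E) B /\
    subT E M (Arr A B) /\ sa E S1 A /\ sa E B T.
Proof.
  intros E M S1 T H. remember (Arr S1 T) as R eqn:HR. revert S1 T HR.
  induction H; intros Sa Ta HR HE HM; try discriminate.
  - assert (HU : wf_typ false (ntv E) U) by (eapply get_bound_wf; eauto).
    destruct (IHsa _ _ HR HE HU) as [A [B [HA [HB [H1 [H2 H3]]]]]].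
    exists A, B. repeat split; auto. eapply subT_trans; [apply subT_var; eauto | auto].
  - inversion HR; subst. simpl in HM. exists S1, S2. repeat split; intuition.
    apply subT_refl; simpl; auto.
Qed.

Lemma expose_all : forall E M S1 T, sa E M (All QT S1 T) -> wf_env false E ->
  wf_typ false (ntv E) M ->
  exists A0 A1, wf_typ false (ntv E) A0 /\ wf_typ false (S (ntv E)) A1 /\
    subT E M (All QT A0 A1) /\ sa E S1 A0 /\ sa (BSub Top :: E) A1 T.
Proof.
  intros E M S1 T H. remember (All QT S1 T) as R eqn:HR. revert S1 T HR.
  induction H; intros Sa Ta HR HE HM; try discriminate.
  - assert (HU : wf_typ false (ntv E) U) by (eapply get_bound_wf; eauto).
    destruct (IHsa _ _ HR HE HU) as [A [B [HA [HB [H1 [H2 H3]]]]]].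
    exists A, B. repeat split; auto. eapply subT_trans; [apply subT_var; eauto | auto].
  - simpl in HM. destruct HM as [[? | ?] _]; discriminate.
  - inversion HR; subst. simpl in HM. exists S0, S1. repeat split; intuition.
    all: try (apply subT_refl; simpl; auto).
Qed.

Definition sae E A B := A = B \/ sa E A B.

Lemma sae_sa : forall E A B C, sae E A B -> sa E B C -> sa E A C.
Proof. intros E A B C [-> | H] H2; auto. eapply sa_trans; eauto. Qed.

Lemma sae_subK : forall E A B C, sae E A B -> subK E B C -> sae E A C.
Proof. intros. right. eapply sae_sa; eauto. apply subK_sa; auto. Qed.

Lemma gen_top : forall E t U, typK E t U -> t = ttop -> U = Top.
Proof.
  induction 1; intros Ht; try discriminate; auto.
  assert (T = Top) by auto. subst. apply subK_sa in H0. apply sa_top_inv in H0; auto.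
Qed.

Lemma gen_var : forall E t U, typK E t U -> forall x, t = var x ->
  exists T, get_var E x = Some T /\ sae E T U.
Proof.
  induction 1; intros y Ht; try discriminate.
  - inversion Ht; subst. exists T; split; auto. left; auto.
  - destruct (IHtypK y Ht) as [T0 [H1 H2]]. exists T0; split; auto.
    eapply sae_subK; eauto.
Qed.

Lemma gen_abs : forall E t U, typK E t U -> forall S1 t1, t = abs S1 t1 ->
  exists T, typK (BVar S1 :: E) t1 T /\ sae E (Arr S1 T) U.
Proof.
  induction 1; intros S2 t2 Ht; try discriminate.
  - destruct (IHtypK _ _ Ht) as [T0 [H1 H2]]. exists T0; split; auto.
    eapply sae_subK; eauto.
  - inversion Ht; subst. exists T; split; auto. left; auto.
Qed.

Lemma gen_tabs : forall E t U, typK E t U -> forall S1 t1, t = tabs S1 t1 ->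
  exists T, typK (BSub S1 :: E) t1 T /\ sae E (All QK S1 T) U.
Proof.
  induction 1; intros S2 t2 Ht; try discriminate.
  - destruct (IHtypK _ _ Ht) as [T0 [H1 H2]]. exists T0; split; auto.
    eapply sae_subK; eauto.
  - inversion Ht; subst. exists T; split; auto. left; auto.
Qed.

Lemma gen_app : forall E t U, typK E t U -> forall t1 t2, t = Defs.app t1 t2 ->
  exists S1 T, typK E t1 (Arr S1 T) /\ typK E t2 S1 /\ sae E T U.
Proof.
  induction 1; intros u1 u2 Ht; try discriminate.
  - destruct (IHtypK _ _ Ht) as [A [B [H1 [H2 H3]]]]. exists A, B; repeat split; auto.
    eapply sae_subK; eauto.
  - inversion Ht; subst. exists S1, T; repeat split; auto. left; auto.
Qed.

Lemma gen_tapp : forall E t U, typK E t U -> forall t1 S', t = tapp t1 S' ->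
  exists S1 T, typK E t1 (All QT S1 T) /\ subK E S' S1 /\ sae E (tsubst T 0 S') U.
Proof.
  induction 1; intros u1 V Ht; try discriminate.
  - destruct (IHtypK _ _ Ht) as [A [B [H1 [H2 H3]]]]. exists A, B; repeat split; auto.
    eapply sae_subK; eauto.
  - inversion Ht; subst. exists S1, T; repeat split; auto. left; auto.
Qed.

Definition is_elim (t : trm) : Prop :=
  match t with var _ | Defs.app _ _ | tapp _ _ => True | _ => False end.

Lemma elim_dec : forall t, is_elim t \/ t = ttop \/ (exists S b, t = abs S b) \/
  (exists S b, t = tabs S b).
Proof. destruct t; simpl; eauto 10. Qed.

Lemma bn_app : forall t1 t2, beta_normal (Defs.app t1 t2) ->
  beta_normal t1 /\ beta_normal t2 /\ (forall S b, t1 <> abs S b).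
Proof. destruct t1; simpl; intros; intuition discriminate. Qed.

Lemma bn_tapp : forall t1 T, beta_normal (tapp t1 T) ->
  beta_normal t1 /\ (forall S b, t1 <> tabs S b).
Proof. destruct t1; simpl; intros; intuition discriminate. Qed.

Lemma from_min : forall E t, wf_env false E ->
  (forall U, typK E t U -> exists M, wf_typ false (ntv E) M /\ typT E t M /\ sa E M U) ->
  forall T, wf_typ false (ntv E) T -> typK E t T -> typT E t T.
Proof.
  intros E t HE H T HT HK. destruct (H _ HK) as [M [HM [H1 H2]]].
  eapply typT_sub; eauto. apply sa_subT; auto.
Qed.

Lemma main : forall t E, wf_env false E -> wf_trm false (ntv E) (nv E) t ->
  beta_normal t ->
  (forall T, wf_typ false (ntv E) T -> typK E t T -> typT E t T) /\
  (is_elim t -> forall U, typK E t U ->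
     exists M, wf_typ false (ntv E) M /\ typT E t M /\ sa E M U).
Proof.
  induction t as [| x | S0 t IH | S0 t IH | t1 IH1 t2 IH2 | t1 IH1 S0];
    intros E HE Hwf Hbn.
  - split; [|simpl; tauto].
    intros T HT HK. rewrite (gen_top _ _ _ HK eq_refl). apply typT_top; auto.
  - assert (Hm : forall U, typK E (var x) U ->
       exists M, wf_typ false (ntv E) M /\ typT E (var x) M /\ sa E M U).
    { intros U HK. destruct (gen_var _ _ _ HK x eq_refl) as [T0 [H1 H2]].
      assert (Hw : wf_typ false (ntv E) T0) by (eapply get_var_wf; eauto).
      exists T0. split; auto. split; [apply typT_var; auto|].
      destruct H2 as [-> | H2]; auto.
      apply sa_refl; [apply wf_env_ft | apply wf_ft]; auto. }
    split; auto. apply from_min; auto.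
  - split; [|simpl; tauto].
    intros T HT HK. simpl in Hwf, Hbn. destruct Hwf as [HS0 Hwt].
    destruct (gen_abs _ _ _ HK _ _ eq_refl) as [T' [HK' Hs]].
    assert (HE' : wf_env false (BVar S0 :: E)) by (simpl; auto).
    destruct (IH (BVar S0 :: E) HE' Hwt Hbn) as [IHa _].
    destruct Hs as [<- | Hs].
    + apply typT_abs. apply IHa; auto. simpl in HT |- *; tauto.
    + inversion Hs; subst.
      * destruct (sa_regular _ _ _ Hs) as [HEt [HA _]]. simpl in HA.
        apply (typT_sub _ _ (Arr S0 Top)); [apply typT_abs; apply IHa|].
        -- simpl; auto.
        -- eapply typK_sub; eauto. apply subK_top; simpl; intuition.
        -- apply subT_top; simpl; auto.
      * simpl in HT. destruct HT as [HT1 HT2].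
        match goal with |- typT _ _ (Arr _ ?B) => apply (typT_sub _ _ (Arr S0 B)) end;
          [apply typT_abs; apply IHa|].
        -- simpl; eauto.
        -- eapply typK_sub; eauto. apply sa_subK.
           apply (sa_weak_bvar _ _ _ H4 [] E S0 eq_refl). apply wf_ft; auto.
        -- apply subT_arrow; [apply sa_subT; auto | apply subT_refl; auto].
  - split; [|simpl; tauto].
    intros T HT HK. simpl in Hwf, Hbn. destruct Hwf as [HS0 Hwt].
    destruct (gen_tabs _ _ _ HK _ _ eq_refl) as [T' [HK' Hs]].
    assert (HE' : wf_env false (BSub S0 :: E)) by (simpl; auto).
    destruct (IH (BSub S0 :: E) HE' Hwt Hbn) as [IHa _].
    destruct Hs as [<- | Hs].
    + simpl in HT. destruct HT as [[? | ?] _]; discriminate.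
    + inversion Hs; subst.
      * destruct (sa_regular _ _ _ Hs) as [HEt [HA _]]. simpl in HA.
        apply (typT_sub _ _ (All QT S0 Top)); [apply typT_tabs; apply IHa|].
        -- simpl; auto.
        -- eapply typK_sub; eauto. apply subK_top; simpl; intuition.
        -- apply subT_top; simpl; auto.
      * simpl in HT. destruct HT as [[? | ?] _]; discriminate.
      * simpl in HT. destruct HT as [_ [HT1 HT2]].
        match goal with |- typT _ _ (All _ _ ?B) => apply (typT_sub _ _ (All QT S0 B)) end;
          [apply typT_tabs; apply IHa|].
        -- simpl; eauto.
        -- eapply typK_sub; eauto. apply sa_subK; eauto.
        -- apply subT_all_top; [apply sa_subT; auto | apply subT_refl; simpl; auto].
  - simpl in Hwf. destruct Hwf as [Hw1 Hw2]. apply bn_app in Hbn as [Hb1 [Hb2 Hna]].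
    destruct (IH2 E HE Hw2 Hb2) as [IHs _].
    assert (Hm : forall U, typK E (Defs.app t1 t2) U ->
       exists M, wf_typ false (ntv E) M /\ typT E (Defs.app t1 t2) M /\ sa E M U).
    { intros U HK. destruct (gen_app _ _ _ HK _ _ eq_refl) as [S1 [T [HK1 [HK2 Hs]]]].
      destruct (elim_dec t1) as [Hel | [-> | [[S [b ->]] | [S [b ->]]]]].
      - destruct (IH1 E HE Hw1 Hb1) as [_ IHe].
        destruct (IHe Hel _ HK1) as [M [HM [HT1 HsM]]].
        destruct (expose_arr _ _ _ _ HsM HE HM) as [A [B [HA [HB [Hsub [HSA HBT]]]]]].
        exists B. split; auto. split.
        + eapply typT_app; [eapply typT_sub; eauto|].
          apply IHs; auto. eapply typK_sub; eauto. apply sa_subK; auto.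
        + eapply sa_trans; eauto. destruct Hs as [<- | Hs]; auto.
          apply sa_refl; [apply wf_env_ft; auto | exact (proj2 (proj2 (sa_regular _ _ _ HBT)))].
      - apply gen_top in HK1; auto; discriminate.
      - exfalso; eapply Hna; eauto.
      - destruct (gen_tabs _ _ _ HK1 _ _ eq_refl) as [T' [_ [Heq | Hs']]];
          [discriminate | inversion Hs']. }
    split; [apply from_min; auto | intros _; auto].
  - simpl in Hwf. destruct Hwf as [Hw1 Hw2]. apply bn_tapp in Hbn as [Hb1 Hnt].
    assert (Hm : forall U, typK E (tapp t1 S0) U ->
       exists M, wf_typ false (ntv E) M /\ typT E (tapp t1 S0) M /\ sa E M U).
    { intros U HK. destruct (gen_tapp _ _ _ HK _ _ eq_refl) as [S1 [T [HK1 [HS Hs]]]].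
      destruct (elim_dec t1) as [Hel | [-> | [[S [b ->]] | [S [b ->]]]]].
      - destruct (IH1 E HE Hw1 Hb1) as [_ IHe].
        destruct (IHe Hel _ HK1) as [M [HM [HT1 HsM]]].
        destruct (expose_all _ _ _ _ HsM HE HM) as [A0 [A1 [HA0 [HA1 [Hsub [HSA HBT]]]]]].
        exists (tsubst A1 0 S0). split; [apply (wf_subst false A1 0 (ntv E)); auto|]. split.
        + eapply typT_tapp; [eapply typT_sub; eauto|].
          apply sa_subT; auto. eapply sa_trans; eauto. apply subK_sa; auto.
        + pose proof (sa_subst _ _ _ HBT [] E S0 eq_refl (wf_ft _ _ Hw2)) as Hsb.
          simpl in Hsb. eapply sa_trans; eauto. destruct Hs as [<- | Hs]; auto.
          apply sa_refl; [apply wf_env_ft; auto | exact (proj2 (proj2 (sa_regular _ _ _ Hsb)))].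
      - apply gen_top in HK1; auto; discriminate.
      - destruct (gen_abs _ _ _ HK1 _ _ eq_refl) as [T' [_ [Heq | Hs']]];
          [discriminate | inversion Hs'].
      - exfalso; eapply Hnt; eauto. }
    split; [apply from_min; auto | intros _; auto].
Qed.

Theorem proposition7p3 (Theta : env) (t : trm) (T : typ) :
  wf_env false Theta ->
  wf_trm false (ntv Theta) (nv Theta) t ->
  beta_normal t ->
  wf_typ false (ntv Theta) T ->
  typK Theta t T ->
  typT Theta t T.
Proof.
  intros HE Hwf Hbn HT HK. exact (proj1 (main t Theta HE Hwf Hbn) T HT HK).
Qed.
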